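(* Let $\mathfrak g$ be of type $C_n$. For $s\ge1$, $\mathbf A_s=\mathbf A^1_s\sqcup\mathbf A^2_s$ where $$\mathbf A^1_s=\bigl\{\{\beta_{i_k,j_k}\}_{1\le k\le s}:\ i_k,j_k\in I\setminus\{n\},\ i_1<\dots<i_s\le j_s<j_{s-1}<\dots<j_1\bigr\},$$ $$\mathbf A^2_s=\bigl\{\{\alpha_{\ell,n}\}\cup\{\beta_{i_k,j_k}\}_{1\le k\le s-1}:\ \{\beta_{i_k,j_k}\}_{1\le k\le s-1}\in\mathbf A^1_{s-1},\ \ell\in I,\ \ell<i_1\bigr\}$$ (for $s=1$, $\mathbf A^2_1=\{\{\alpha_{\ell,n}\}:\ell\in I\}$). Moreover $\#\mathbf A^1_s=\binom{n-1}{2s}+\binom{n-1}{2s-1}$, $\#\mathbf A^2_s=\binom{n-1}{2s-1}+\binom{n-1}{2s-2}$, and $\sum_{s\ge0}\#\mathbf A_s=2^n$.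
   Context: Simple roots $\alpha_1,\dots,\alpha_n$ of $C_n$ numbered as in Bourbaki ($\alpha_n$ long), $I=\{1,\dots,n\}$. Set $\alpha_{i,j}=\alpha_i+\dots+\alpha_j$ for $i\le j$ and $\beta_{k,\ell}=\alpha_{k,n-1}+\alpha_{\ell,n}$ for $k\le\ell$ in $I\setminus\{n\}$; then $R^+=\{\alpha_{i,j}\}\cup\{\beta_{k,\ell}\}$ and $\theta=\beta_{1,1}$. Partial order: $\lambda\le\mu$ iff $\mu-\lambda$ is a nonnegative integer combination of simple roots. An antichain is a subset of $R^+$ of pairwise incomparable elements; $\Phi(A)=\{\alpha\in R^+:\alpha\ge\beta$ for some $\beta\in A\}$; $A$ is abelian if $\beta_1+\beta_2\notin R$ for all $\beta_1,\beta_2\in\Phi(A)$. $\mathbf A_s$ is the set of abelian antichains with $s$ elements; $\mathbf A_0$ and $\mathbf A^1_0$ consist of the empty antichain. Convention: $\binom{m}{k}=0$ if $k>m$ or $k<0$. *)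

(* Defs.v *)
From HB Require Import structures.
From mathcomp Require Import all_boot all_order all_algebra.
Set Implicit Arguments. Unset Strict Implicit. Unset Printing Implicit Defensive.
Import Order.TTheory GRing.Theory Num.Theory.

(* Labels: inl (i,j) stands for alpha_{i+1,j+1} (needs i <= j);
   inr (k,l) stands for beta_{k+1,l+1} (needs k <= l and l+1 <= n-1). *)
Definition label (n : nat) := (('I_n * 'I_n) + ('I_n * 'I_n))%type.

Definition validb (n : nat) (x : label n) : bool :=
  match x with
  | inl (i, j) => (i <= j)%N
  | inr (k, l) => (k <= l)%N && (l.+1 < n)%N
  end.

Definition posroot (n : nat) := {x : label n | validb x}.

(* Coefficient of alpha_{m+1} in the root with label x.
   alpha_{i,j} = alpha_i + ... + alpha_j ;
   beta_{k,l} = alpha_{k,n-1} + alpha_{l,n}. *)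
Definition coef (n : nat) (x : label n) (m : 'I_n) : int :=
  match x with
  | inl (i, j) => (nat_of_bool ((i <= m)%N && (m <= j)%N))%:Z
  | inr (k, l) => ((nat_of_bool ((k <= m)%N && (m <= n - 2)%N))%:Z
                  + (nat_of_bool ((l <= m)%N && (m <= n - 1)%N))%:Z)%R
  end.

Definition rcoef (n : nat) (a : posroot n) (m : 'I_n) : int := coef (val a) m.

Definition rle (n : nat) (a b : posroot n) : bool :=
  [forall m : 'I_n, (rcoef a m <= rcoef b m)%R].

Definition sum_is_root (n : nat) (a b : posroot n) : bool :=
  [exists c : posroot n,
     [forall m : 'I_n, (rcoef a m + rcoef b m == rcoef c m)%R]
  || [forall m : 'I_n, (rcoef a m + rcoef b m == - rcoef c m)%R]].

Definition antichain (n : nat) (A : {set posroot n}) : bool :=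
  [forall a in A, forall b in A, (a != b) ==> ~~ rle a b].

Definition Phi (n : nat) (A : {set posroot n}) : {set posroot n} :=
  [set x : posroot n | [exists b in A, rle b x]].

Definition abelian_set (n : nat) (A : {set posroot n}) : bool :=
  [forall b1 in Phi A, forall b2 in Phi A, ~~ sum_is_root b1 b2].

Definition Aset (n s : nat) : {set {set posroot n}} :=
  [set A : {set posroot n} | [&& antichain A, abelian_set A & #|A| == s]].

(* i_1 < ... < i_s <= j_s < ... < j_1, all in I \ {n}; f k = (i_{k+1}-1, j_{k+1}-1) *)
Definition chainB (n s : nat) (f : {ffun 'I_s -> 'I_n * 'I_n}) : bool :=
  [&& [forall k : 'I_s, ((f k).2.+1 < n)%N && ((f k).1 <= (f k).2)%N]
    & [forall k1 : 'I_s, forall k2 : 'I_s,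
         (k1 < k2)%N ==> ((f k1).1 < (f k2).1)%N && ((f k2).2 < (f k1).2)%N]].

Definition setB (n s : nat) (f : {ffun 'I_s -> 'I_n * 'I_n}) : {set posroot n} :=
  [set x : posroot n | [exists k : 'I_s, val x == inr (f k)]].

Definition A1set (n s : nat) : {set {set posroot n}} :=
  [set S : {set posroot n} |
     [exists f : {ffun 'I_s -> 'I_n * 'I_n}, chainB f && (S == setB f)]].

Definition is_alpha_to_n (n : nat) (l : 'I_n) (x : posroot n) : bool :=
  match val x with
  | inl (a, b) => (a == l) && (nat_of_ord b == n.-1)
  | inr _ => false
  end.

Definition A2set (n s : nat) : {set {set posroot n}} :=
  [set S : {set posroot n} |
     [exists l : 'I_n, exists f : {ffun 'I_s.-1 -> 'I_n * 'I_n},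
        [&& chainB f, [forall k : 'I_s.-1, (l < (f k).1)%N] &
            S == [set x : posroot n | is_alpha_to_n l x] :|: setB f]]].

(* Main.v *)
Require Import Defs.
From HB Require Import structures.
From mathcomp Require Import all_boot all_order all_algebra.
From Stdlib Require Import Lia.
Set Implicit Arguments. Unset Strict Implicit. Unset Printing Implicit Defensive.
Import Order.TTheory GRing.Theory Num.Theory.

Ltac mlia := intros;
  repeat match goal with
  | H : (leq _ _) = false |- _ => let H' := fresh "Hm" in move/negbT: H => H'
  | H : is_true (~~ leq _ _) |- _ => rewrite -ltnNge in H
  | H : is_true (leq _ _) |- _ => let H' := fresh "Hm" in move/ssrnat.leP: H => H'
  | H : is_true (_ == _) |- _ => let H' := fresh "Hm" in first [move/eqnP: H => H' | move/eqP: H => H']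
  | H : is_true (~~ (_ == _)) |- _ => let H' := fresh "Hm" in first [move/eqnP: H => H' | move/eqP: H => H']
  | H : context [nat_of_ord (@ord_max ?m)] |- _ => change (nat_of_ord (@ord_max m)) with m in H
  | |- context [nat_of_ord (@ord_max ?m)] => change (nat_of_ord (@ord_max m)) with m
  | H : context [predn ?x] |- _ => rewrite -(subn1 x) in H
  | |- context [predn ?x] => rewrite -(subn1 x)
  | |- is_true (_ && _) => apply/andP; split
  | H : is_true (_ && _) |- _ => case/andP: H => ? ?
  | |- is_true (leq _ _) => apply/ssrnat.leP
  | |- is_true (_ == _) => first [apply/eqnP | apply/eqP]
  | |- is_true (~~ (_ == _)) => first [apply/eqnP | apply/eqP]
  end; unfold addn, subn, muln in *; try unfold label in *; lia.

Ltac bcase := repeat (rewrite ?andTb ?andFb ?andbT ?andbF; match goal with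
 | |- context [nat_of_bool ((?a <= ?b)%N)] => case: (leqP a b) => ?
 | |- context [((?a <= ?b)%N && _)] => case: (leqP a b) => ?
 end).

Lemma rank_surj (T : finType) (B : {set T}) (r : T -> nat) :
  {in B &, injective r} -> {in B, forall x, r x < #|B|} ->
  forall k, k < #|B| -> exists2 x, x \in B & r x = k.
Proof.
move=> rinj rlt k hk.
have U : uniq [seq r x | x <- enum B].
  rewrite map_inj_in_uniq ?enum_uniq // => x y; rewrite !mem_enum; exact: rinj.
have S : {subset [seq r x | x <- enum B] <= iota 0 #|B|}.
  move=> z /mapP [x]; rewrite mem_enum => xB ->; rewrite mem_iota /=; exact: rlt.
have hs : size (iota 0 #|B|) <= size [seq r x | x <- enum B].
  by rewrite size_iota size_map cardE.
have [_ E] := uniq_min_size U S hs.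
have : k \in iota 0 #|B| by rewrite mem_iota.
rewrite -E => /mapP [x]; rewrite mem_enum => xB ->; by exists x.
Qed.

Lemma card_or (T : finType) (P Q R : pred T) : (forall x, ~~ (Q x && R x)) ->
  #|[set x | P x && (Q x || R x)]| = #|[set x | P x && Q x]| + #|[set x | P x && R x]|.
Proof.
move=> hQR.
have -> : [set x | P x && (Q x || R x)] = [set x | P x && Q x] :|: [set x | P x && R x].
  apply/setP => x; rewrite !inE.
  by case: (P x); case: (Q x); case: (R x).
rewrite -cardsUI.
have -> : [set x | P x && Q x] :&: [set x | P x && R x] = set0.
  apply/setP => x; rewrite !inE; apply/negbTE; move: (hQR x).
  by case: (P x); case: (Q x); case: (R x).
by rewrite cards0 addn0.
Qed.

Section Main.
Variable N : nat.
Local Notation n := N.+1.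

Definition cn (x : label n) (m : 'I_n) : nat :=
  match x with
  | inl (i, j) => nat_of_bool ((i <= m)%N && (m <= j)%N)
  | inr (k, l) => (nat_of_bool ((k <= m)%N && (m <= n - 2)%N))
                  + (nat_of_bool ((l <= m)%N && (m <= n - 1)%N))
  end.

Lemma coefE x m : coef x m = Posz (cn x m).
Proof. by case: x => [[i j]|[k l]] //=; rewrite PoszD. Qed.

Lemma rleE (a b : posroot n) : rle a b = [forall m, (cn (val a) m <= cn (val b) m)%N].
Proof. by apply: eq_forallb => m; rewrite /rcoef !coefE lez_nat. Qed.

Definition plusb (x : posroot n) : bool :=
  match val x with inl (_, b) => b == ord_max | inr _ => true end.
Definition pIo (x : posroot n) : 'I_n :=
  match val x with inl (a, _) => a | inr (k, _) => k end.
Definition pJo (x : posroot n) : 'I_n :=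
  match val x with inl (_, b) => b | inr (_, l) => l end.

Lemma pIJ x : (pIo x <= pJo x)%N.
Proof. case: x => [[[i j]|[k l]] v]; rewrite /pIo /pJo /= in v *; [exact v | by case/andP: v]. Qed.

Lemma cnN (x : posroot n) : cn (val x) ord_max = plusb x.
Proof.
case: x => [[[i j]|[k l]] v]; rewrite /plusb /=.
  by rewrite leq_ord -val_eqE /= eqn_leq leq_ord.
move: v => /= /andP [v1 v2].
have -> : (N <= N.+1 - 2)%N = false.
  apply/negbTE; rewrite -ltnNge; mlia.
by rewrite andbF leq_ord /= subn1 leqnn.
Qed.

Ltac bsolve := bcase; rewrite /= ?andbT ?andbF ?andTb ?andFb; first [done | mlia].

Lemma ltN_of (m : 'I_n) : m != ord_max -> (m < N)%N.
Proof. by move=> h; rewrite ltn_neqAle leq_ord andbT; rewrite -val_eqE in h. Qed.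

Lemma eq_max_of (m : 'I_n) : (N <= m)%N -> m = ord_max.
Proof. by move=> h; apply/val_inj/eqP; rewrite /= eqn_leq leq_ord h. Qed.

Lemma cn_plus x (m : 'I_n) : plusb x -> (m < N)%N ->
  cn (val x) m = ((pIo x <= m)%N : nat) + ((pJo x <= m)%N : nat).
Proof.
case: x => [[[i j]|[k l]] v]; rewrite /plusb /pIo /pJo /= => hp hm.
  move/eqP/(congr1 val): hp => /= hj; rewrite hj; bsolve.
bsolve.
Qed.

Lemma rle_plus x y : plusb x -> plusb y ->
  rle x y = (pIo y <= pIo x)%N && (pJo y <= pJo x)%N.
Proof.
move=> px py; rewrite rleE; apply/forallP/andP.
  move=> H; have hy := pIJ y; have hx := pIJ x; split.
    case: (ltnP (pIo x) N) => h; last by have := leq_ord (pIo y); mlia.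
    have := H (pIo x); rewrite !cn_plus //; bsolve.
  case: (ltnP (pJo x) N) => h; last by have := leq_ord (pJo y); mlia.
  have := H (pJo x); rewrite !cn_plus //; bsolve.
move=> [h1 h2] m; case: (ltnP m N) => hm.
  rewrite !cn_plus //; bsolve.
by rewrite (eq_max_of hm) !cnN px py.
Qed.

Lemma plus_inj x y : plusb x -> plusb y -> pIo x = pIo y -> pJo x = pJo y -> x = y.
Proof.
case: x => [[[i j]|[k l]] v]; case: y => [[[i' j']|[k' l']] v'];
  rewrite /plusb /pIo /pJo /= => hx hy e1 e2.
- by apply/val_inj => /=; rewrite e1 e2.
- exfalso; have /andP [_ h] := v'; move: h; rewrite -e2 (eqP hx) /=; mlia.
- exfalso; have /andP [_ h] := v; move: h; rewrite e2 (eqP hy) /=; mlia.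
- by apply/val_inj => /=; rewrite e1 e2.
Qed.

Lemma Phi_plus (A : {set posroot n}) a : [forall x in A, plusb x] -> a \in Phi A ->
  (1 <= cn (val a) ord_max)%N.
Proof.
move=> /forall_inP hA; rewrite inE => /exists_inP [b bA]; rewrite rleE => /forallP /(_ ord_max).
by rewrite cnN hA.
Qed.

Lemma not_sum_plus (A : {set posroot n}) a b : [forall x in A, plusb x] ->
  a \in Phi A -> b \in Phi A -> ~~ sum_is_root a b.
Proof.
move=> hA ha hb; have h1 := Phi_plus hA ha; have h2 := Phi_plus hA hb.
apply/existsP => -[c /orP []] /forallP /(_ ord_max); rewrite /rcoef !coefE -PoszD.
  rewrite eqz_nat (cnN c); move: h1 h2; case: (plusb c) => /=; mlia.
move: h1 h2; case: (cn (val c) ord_max) => [|r]; last by [].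
rewrite oppr0 eqz_nat /=; mlia.
Qed.

Lemma abelianE (A : {set posroot n}) : abelian_set A = [forall x in A, plusb x].
Proof.
apply/idP/idP; last first.
  move=> hA; apply/forall_inP => a ha; apply/forall_inP => b hb; exact: (not_sum_plus hA ha hb).
move=> Hab; apply/forall_inP => x xA; apply/negPn/negP => nx.
case: x xA nx => [[[i j]|[k l]] v] xA; rewrite /plusb //= => nj.
have hj := ltN_of nj; have hij : (i <= j)%N := v.
pose yl : label n := if (j.+1 < N)%N then inr (i, inord j.+1) else inl (i, ord_max).
have vy : validb yl.
  rewrite /yl; case: ifP => h /=; last exact: leq_ord.
  rewrite inordK; mlia.
have vc : validb (inr (i, i) : label n) by rewrite /= leqnn /=; mlia.
pose xr : posroot n := exist _ (inl (i, j)) v.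
pose y : posroot n := exist _ yl vy.
pose c : posroot n := exist _ (inr (i, i)) vc.
have hxy : rle xr y.
  rewrite rleE; apply/forallP => m /=; rewrite /yl; case: ifP => h /=.
    rewrite inordK; last by mlia.
    bsolve.
  bsolve.
have xP : xr \in Phi A.
  by rewrite inE; apply/exists_inP; exists xr => //; rewrite rleE; apply/forallP => m.
have yP : y \in Phi A.
  by rewrite inE; apply/exists_inP; exists xr.
move: Hab => /forall_inP /(_ _ xP) /forall_inP /(_ _ yP) /negP; apply.
apply/existsP; exists c; apply/orP; left; apply/forallP => m.
rewrite /rcoef !coefE -PoszD eqz_nat /= /yl; case: ifP => h /=.
  rewrite inordK; last by mlia.
  bsolve.
bsolve.
Qed.

Definition PA (A : {set posroot n}) := [forall x in A, plusb x] && antichain A.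

Lemma AsetE s : Aset n s = [set A | PA A && (#|A| == s)].
Proof. by apply/setP => A; rewrite !inE abelianE /PA andbA [antichain A && _]andbC. Qed.

Section PAfacts.
Variable A : {set posroot n}.
Hypothesis hA : PA A.

Lemma PA_plus x : x \in A -> plusb x.
Proof. by case/andP: hA => /forall_inP h _; apply: h. Qed.

Lemma PA_anti x y : x \in A -> y \in A -> x != y -> ~~ rle x y.
Proof.
case/andP: hA => _ /forall_inP h xA yA nxy.
by move: (h x xA) => /forall_inP /(_ y yA) /implyP /(_ nxy).
Qed.

Lemma PA_injI x y : x \in A -> y \in A -> pIo x = pIo y -> x = y.
Proof.
move=> xA yA e; apply/eqP/negP => /negP nxy.
have h1 := PA_anti xA yA nxy; have h2 : ~~ rle y x by apply: PA_anti => //; rewrite eq_sym.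
move: h1 h2; rewrite !rle_plus ?(PA_plus xA) ?(PA_plus yA) // e leqnn /=; mlia.
Qed.

Lemma PA_injJ x y : x \in A -> y \in A -> pJo x = pJo y -> x = y.
Proof.
move=> xA yA e; apply/eqP/negP => /negP nxy.
have h1 := PA_anti xA yA nxy; have h2 : ~~ rle y x by apply: PA_anti => //; rewrite eq_sym.
move: h1 h2; rewrite !rle_plus ?(PA_plus xA) ?(PA_plus yA) // e leqnn /= !andbT; mlia.
Qed.

Lemma PA_nest x y : x \in A -> y \in A -> (pIo x < pIo y)%N -> (pJo y < pJo x)%N.
Proof.
move=> xA yA lt; have nxy : y != x.
  by apply/negP => /eqP e; move: lt; rewrite e ltnn.
have := PA_anti yA xA nxy; rewrite rle_plus ?(PA_plus xA) ?(PA_plus yA) //.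
rewrite (ltnW lt) /=; mlia.
Qed.

Lemma PA_IJ x y : x \in A -> y \in A -> (pIo x <= pJo y)%N.
Proof.
move=> xA yA; have := pIJ y; have := pIJ x.
case: (ltnP (pIo y) (pIo x)) => h; last by mlia.
have := PA_nest yA xA h; mlia.
Qed.

Lemma PA_IJeq x y : x \in A -> y \in A -> pIo x = pJo y -> x = y.
Proof.
move=> xA yA e; have e' : (pIo x : nat) = pJo y by rewrite e.
apply: PA_injI => //; have := pIJ y; have := pIJ x.
case: (ltngtP (pIo x) (pIo y)) => [h|h|h]; [mlia | | by move=> *; apply/val_inj].
have := PA_nest yA xA h; mlia.
Qed.

End PAfacts.

Lemma PA_sub (A B : {set posroot n}) : B \subset A -> PA A -> PA B.
Proof.
move=> /subsetP sub /andP [/forall_inP h1 /forall_inP h2]; apply/andP; split.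
  by apply/forall_inP => x /sub; apply: h1.
apply/forall_inP => x xB; apply/forall_inP => y yB; move: (h2 x (sub _ xB)).
by move/forall_inP/(_ y (sub _ yB)).
Qed.

Lemma PA_intro (A : {set posroot n}) :
  {in A, forall x, plusb x} ->
  {in A &, forall x y, (pIo x < pIo y)%N -> (pJo y < pJo x)%N} ->
  {in A &, forall x y, pIo x = pIo y -> x = y} -> PA A.
Proof.
move=> hp hn hi; apply/andP; split; first by apply/forall_inP.
apply/forall_inP => x xA; apply/forall_inP => y yA; apply/implyP => nxy.
rewrite rle_plus ?hp //; apply/negP => /andP [h1 h2].
case: (ltngtP (pIo x) (pIo y)) => h.
- mlia.
- have := hn _ _ yA xA h; mlia.
- by move: nxy; rewrite (hi _ _ xA yA (val_inj h)) eqxx.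
Qed.

Definition d0 : posroot n := exist _ (inl (ord0, ord0)) (leqnn 0).
Definition mkB (p : 'I_n * 'I_n) : posroot n := insubd d0 (inr p).
Definition isA (x : posroot n) : bool := if val x is inl _ then true else false.
Definition hasA (A : {set posroot n}) := [exists x in A, isA x].

Lemma mkB_val (p : 'I_n * 'I_n) : (p.1 <= p.2)%N -> (p.2.+1 < n)%N -> val (mkB p) = inr p.
Proof. by case: p => a b /= h1 h2; rewrite /mkB insubdK //; apply/andP. Qed.

Lemma nonA_val x : ~~ isA x -> val x = inr (pIo x, pJo x) /\ ((pJo x).+1 < n)%N.
Proof. case: x => [[[i j]|[k l]] v] // _; split => //; by have /andP [] := v. Qed.

Section Chains.
Variable s : nat.
Variable f : {ffun 'I_s -> 'I_n * 'I_n}.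
Hypothesis hf : chainB f.

Lemma chain1 k : ((f k).2.+1 < n)%N /\ ((f k).1 <= (f k).2)%N.
Proof. by case/andP: hf => /forallP /(_ k) /andP []. Qed.

Lemma chain2 (k1 k2 : 'I_s) : (k1 < k2)%N -> ((f k1).1 < (f k2).1)%N /\ ((f k2).2 < (f k1).2)%N.
Proof. by case/andP: hf => _ /forallP /(_ k1) /forallP /(_ k2) /implyP h /h /andP []. Qed.

Lemma chain_val k : val (mkB (f k)) = inr (f k).
Proof. by have [h1 h2] := chain1 k; rewrite mkB_val. Qed.

Lemma chain_inj : injective f.
Proof.
move=> k1 k2 e; apply/val_inj; case: (ltngtP k1 k2) => // h.
  by have [h1 _] := chain2 h; move: h1; rewrite e ltnn.
by have [h1 _] := chain2 h; move: h1; rewrite e ltnn.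
Qed.

Lemma setB_chain : setB f = [set mkB (f k) | k : 'I_s].
Proof.
apply/setP => x; rewrite inE; apply/existsP/imsetP.
  by move=> [k /eqP e]; exists k => //; apply/val_inj; rewrite e chain_val.
by move=> [k _ ->]; exists k; rewrite chain_val.
Qed.

Lemma card_setB : #|setB f| = s.
Proof.
rewrite setB_chain card_imset ?card_ord // => k1 k2 e.
apply: chain_inj; move/(congr1 val): e; rewrite !chain_val; by case.
Qed.

Lemma pI_mkB k : pIo (mkB (f k)) = (f k).1.
Proof. by rewrite /pIo chain_val; case: (f k). Qed.
Lemma pJ_mkB k : pJo (mkB (f k)) = (f k).2.
Proof. by rewrite /pJo chain_val; case: (f k). Qed.
Lemma plus_mkB k : plusb (mkB (f k)).
Proof. by rewrite /plusb chain_val. Qed.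
Lemma isA_mkB k : isA (mkB (f k)) = false.
Proof. by rewrite /isA chain_val. Qed.

Lemma setB_PA : PA (setB f).
Proof.
rewrite setB_chain; apply: PA_intro.
- by move=> x /imsetP [k _ ->]; apply: plus_mkB.
- move=> x y /imsetP [k1 _ ->] /imsetP [k2 _ ->]; rewrite !pI_mkB !pJ_mkB => h.
  case: (ltngtP k1 k2) => h12.
  + by have [] := chain2 h12.
  + by have [h1 _] := chain2 h12; mlia.
  + by move: h; rewrite (val_inj h12) ltnn.
- move=> x y /imsetP [k1 _ ->] /imsetP [k2 _ ->]; rewrite !pI_mkB => h.
  case: (ltngtP k1 k2) => h12.
  + by have [h1 _] := chain2 h12; move: h1; rewrite h ltnn.
  + by have [h1 _] := chain2 h12; move: h1; rewrite h ltnn.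
  + by rewrite (val_inj h12).
Qed.

Lemma setB_noA : ~~ hasA (setB f).
Proof. by rewrite setB_chain; apply/exists_inP => -[x /imsetP [k _ ->]]; rewrite isA_mkB. Qed.

End Chains.

Lemma chain_of (B : {set posroot n}) t : PA B -> ~~ hasA B -> #|B| = t ->
  exists f : {ffun 'I_t -> 'I_n * 'I_n}, chainB f && (B == setB f).
Proof.
move=> hB nA cB.
have nAx : forall x, x \in B -> ~~ isA x.
  by move=> x xB; apply/negP => ax; move: nA; rewrite negb_exists_in => /forall_inP /(_ x xB); rewrite ax.
pose rank x := #|[set y in B | (pIo y < pIo x)%N]|.
have rank_lt : {in B, forall x, rank x < #|B|}.
  move=> x xB; apply: proper_card; apply/properP; split.
    by apply/subsetP => y; rewrite inE => /andP [].
  by exists x => //; rewrite inE ltnn andbF.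
have rank_mono : forall x y, (pIo y <= pIo x)%N -> rank y <= rank x.
  move=> x y h; apply: subset_leq_card; apply/subsetP => z; rewrite !inE => /andP [-> /=] h2.
  exact: leq_trans h2 h.
have rank_strict : forall x y, y \in B -> (pIo y < pIo x)%N -> rank y < rank x.
  move=> x y yB h; apply: proper_card; apply/properP; split.
    apply/subsetP => z; rewrite !inE => /andP [-> /=] h2; exact: ltn_trans h2 h.
  by exists y; rewrite !inE ?yB ?h ?ltnn ?andbF.
have rank_inj : {in B &, injective rank}.
  move=> x y xB yB e; case: (ltngtP (pIo x) (pIo y)) => h.
  - by have := rank_strict _ _ xB h; rewrite e ltnn.
  - by have := rank_strict _ _ yB h; rewrite e ltnn.
  - exact: (PA_injI hB xB yB (val_inj h)).
pose g (k : 'I_t) := odflt d0 [pick x in B | rank x == k].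
have gP : forall k : 'I_t, g k \in B /\ rank (g k) = k.
  move=> k; rewrite /g; case: pickP => [x /andP [xB /eqP e] | none] //=.
  have hk : (k < #|B|)%N by rewrite cB.
  have [x xB e] := rank_surj rank_inj rank_lt hk.
  by move: (none x); rewrite xB e eqxx.
exists [ffun k => (pIo (g k), pJo (g k))]; apply/andP; split.
  apply/andP; split.
    apply/forallP => k; rewrite ffunE /=; have [gB _] := gP k.
    by have [_ ->] := nonA_val (nAx _ gB); rewrite pIJ.
  apply/forallP => k1; apply/forallP => k2; apply/implyP => h; rewrite !ffunE /=.
  have [g1 r1] := gP k1; have [g2 r2] := gP k2.
  have hI : (pIo (g k1) < pIo (g k2))%N.
    rewrite ltnNge; apply/negP => /rank_mono; rewrite r1 r2; mlia.
  by rewrite hI (PA_nest hB g1 g2 hI).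
apply/eqP/setP => x; rewrite inE; apply/idP/existsP.
  move=> xB; have hx := rank_lt x xB; rewrite cB in hx.
  exists (Ordinal hx); rewrite ffunE /=.
  have [gB gr] := gP (Ordinal hx).
  have -> : g (Ordinal hx) = x by apply: rank_inj => //; rewrite gr.
  by have [-> _] := nonA_val (nAx _ xB).
move=> [k]; rewrite ffunE /= => /eqP e.
have [gB _] := gP k; have [e2 _] := nonA_val (nAx _ gB).
by have -> : x = g k by apply/val_inj => /=; rewrite e e2.
Qed.

Lemma A1E s : A1set n s = [set A | PA A && (#|A| == s) && ~~ hasA A].
Proof.
apply/setP => A; rewrite !inE; apply/existsP/idP.
  by move=> [f /andP [hf /eqP ->]]; rewrite setB_PA // card_setB // eqxx setB_noA.
move=> /andP [/andP [hA /eqP cA] nA]; have [f hf] := chain_of hA nA cA; by exists f.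
Qed.

Definition aL (l : 'I_n) : posroot n := insubd d0 (inl (l, ord_max)).
Lemma aL_val l : val (aL l) = inl (l, ord_max).
Proof. by rewrite /aL insubdK //; apply: leq_ord. Qed.

Lemma alpha_set l : [set x | is_alpha_to_n l x] = [set aL l].
Proof.
apply/setP => x; rewrite !inE /is_alpha_to_n; apply/idP/eqP; last by move=> ->; rewrite aL_val /= !eqxx.
case: x => [[[a b]|[k k']] v] //= /andP [/eqP ea /eqP eb]; apply/val_inj; rewrite aL_val /= ea.
by congr (inl (_, _)); apply/val_inj.
Qed.

Lemma alpha_val x : plusb x -> isA x -> val x = inl (pIo x, ord_max) /\ pJo x = ord_max.
Proof. by case: x => [[[a b]|[k kk]] v] //; rewrite /plusb /pIo /pJo /isA /= => /eqP e _; rewrite e. Qed.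

Lemma A2E s : (1 <= s)%N -> A2set n s = [set A | PA A && (#|A| == s) && hasA A].
Proof.
move=> s1; apply/setP => A; rewrite !inE; apply/existsP/idP.
  move=> [l /existsP [f /and3P [hf /forallP hl /eqP ->]]]; rewrite alpha_set.
  have aLn : aL l \notin setB f.
    by rewrite setB_chain //; apply/imsetP => -[k _ /(congr1 val)]; rewrite aL_val chain_val.
  have pIaL : pIo (aL l) = l by rewrite /pIo aL_val.
  have pJaL : pJo (aL l) = ord_max by rewrite /pJo aL_val.
  have plaL : plusb (aL l) by rewrite /plusb aL_val.
  have PB := setB_PA hf.
  rewrite cardsU1 aLn card_setB // add1n prednK // eqxx andbT; apply/andP; split; last first.
    by apply/exists_inP; exists (aL l); rewrite ?setU11 // /isA aL_val.
  apply: PA_intro.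
  - by move=> x /setU1P [-> //| xB]; apply: (PA_plus PB).
  - move=> x y /setU1P [-> | xB] /setU1P [-> | yB]; rewrite ?ltnn //.
    + move: yB; rewrite setB_chain // => /imsetP [k _ ->]; rewrite pJ_mkB // pJaL.
      by have [h _] := chain1 hf k; mlia.
    + move: xB; rewrite setB_chain // => /imsetP [k _ ->]; rewrite pI_mkB // pIaL.
      by have := hl k; mlia.
    + exact: (PA_nest PB).
  - move=> x y /setU1P [-> | xB] /setU1P [-> | yB] //.
    + move: yB; rewrite setB_chain // => /imsetP [k _ ->]; rewrite pI_mkB // pIaL => e.
      by have := hl k; rewrite -e ltnn.
    + move: xB; rewrite setB_chain // => /imsetP [k _ ->]; rewrite pI_mkB // pIaL => e.
      by have := hl k; rewrite e ltnn.
    + exact: (PA_injI PB).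
move=> /andP [/andP [hA /eqP cA] /exists_inP [a0 a0A ia0]].
have [va0 ja0] := alpha_val (PA_plus hA a0A) ia0.
pose B := A :\ a0.
have hB : PA B by apply: PA_sub hA; apply: subsetDl.
have nB : ~~ hasA B.
  apply/exists_inP => -[x /setD1P [nx xA] ix].
  have [_ jx] := alpha_val (PA_plus hA xA) ix.
  by move: nx; rewrite (PA_injJ hA xA a0A (etrans jx (esym ja0))) eqxx.
have cB : #|B| = s.-1 by move: cA; rewrite (cardsD1 a0) a0A add1n => <-.
have [f /andP [hf /eqP eB]] := chain_of hB nB cB.
exists (pIo a0); apply/existsP; exists f; rewrite hf /=; apply/andP; split.
  apply/forallP => k; have yB : mkB (f k) \in B by rewrite eB setB_chain //; apply/imsetP; exists k.
  move: (yB) => /setD1P [ny yA]; rewrite -(pI_mkB hf).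
  case: (ltngtP (pIo a0) (pIo (mkB (f k)))) => // h.
    have := PA_nest hA yA a0A h; rewrite ja0 /=; have := leq_ord (pJo (mkB (f k))); mlia.
  by move: ny; rewrite (PA_injI hA yA a0A (esym (val_inj h))) eqxx.
rewrite alpha_set -eB; have -> : aL (pIo a0) = a0 by apply/val_inj; rewrite /= aL_val va0.
by rewrite setD1K.
Qed.

Definition Psi (A : {set posroot n}) : {set 'I_n} :=
  [set pIo x | x in A] :|: [set pJo x | x in A].
Definition rl (U : {set 'I_n}) (i : nat) := #|[set u in U | (u < i)%N]|.
Definition rg (U : {set 'I_n}) (j : nat) := #|[set u in U | (j < u)%N]|.

Section Ranks.
Variable U : {set 'I_n}.

Lemma rl_mono a b : (a <= b)%N -> (rl U a <= rl U b)%N.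
Proof.
move=> h; apply: subset_leq_card; apply/subsetP => z; rewrite !inE => /andP [-> /=] h2.
exact: leq_trans h2 h.
Qed.

Lemma rl_strict (a : 'I_n) b : a \in U -> (a < b)%N -> (rl U a < rl U b)%N.
Proof.
move=> aU h; apply: proper_card; apply/properP; split.
  apply/subsetP => z; rewrite !inE => /andP [-> /=] h2; exact: ltn_trans h2 h.
by exists a; rewrite !inE ?aU ?h ?ltnn ?andbF.
Qed.

Lemma rg_mono a b : (a <= b)%N -> (rg U b <= rg U a)%N.
Proof.
move=> h; apply: subset_leq_card; apply/subsetP => z; rewrite !inE => /andP [-> /=] h2.
exact: leq_ltn_trans h h2.
Qed.

Lemma rg_strict a (b : 'I_n) : b \in U -> (a < b)%N -> (rg U b < rg U a)%N.
Proof.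
move=> bU h; apply: proper_card; apply/properP; split.
  apply/subsetP => z; rewrite !inE => /andP [-> /=] h2; exact: ltn_trans h h2.
by exists b; rewrite !inE ?bU ?h ?ltnn ?andbF.
Qed.

Lemma rl_inj (a b : 'I_n) : a \in U -> b \in U -> rl U a = rl U b -> a = b.
Proof.
move=> aU bU e; apply/val_inj; case: (ltngtP a b) => // h.
  by have := rl_strict aU h; rewrite e ltnn.
by have := rl_strict bU h; rewrite e ltnn.
Qed.

Lemma rg_inj (a b : 'I_n) : a \in U -> b \in U -> rg U a = rg U b -> a = b.
Proof.
move=> aU bU e; apply/val_inj; case: (ltngtP a b) => // h.
  by have := rg_strict bU h; rewrite e ltnn.
by have := rg_strict aU h; rewrite e ltnn.
Qed.

Lemma rl_rg (w : 'I_n) : w \in U -> rl U w + rg U w + 1 = #|U|.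
Proof.
move=> wU; rewrite (cardsD1 w U) wU add1n addn1; congr S.
have -> : U :\ w = [set u in U | (u < w)%N] :|: [set u in U | (w < u)%N].
  apply/setP => u; rewrite !inE -val_eqE neq_ltn; by case: (u \in U); rewrite /= ?andbT ?andbF.
have := cardsUI [set u in U | (u < w)%N] [set u in U | (w < u)%N].
have -> : [set u in U | (u < w)%N] :&: [set u in U | (w < u)%N] = set0.
  apply/setP => u; rewrite !inE; apply/negP => /andP [/andP [_ h1] /andP [_ h2]]; mlia.
by rewrite cards0 addn0.
Qed.

End Ranks.

Definition mkP (i j : 'I_n) : posroot n := if j == ord_max then aL i else mkB (i, j).

Lemma mkP_props (i j : 'I_n) : (i <= j)%N ->
  [/\ pIo (mkP i j) = i, pJo (mkP i j) = j & plusb (mkP i j)].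
Proof.
move=> h; rewrite /mkP; case: eqP => [-> | /eqP ne].
  by rewrite /pIo /pJo /plusb aL_val.
have hv := mkB_val (p := (i, j)) h (ltN_of ne).
by rewrite /pIo /pJo /plusb hv.
Qed.

Section PsiFacts.
Variable A : {set posroot n}.
Hypothesis hA : PA A.

Definition rankA x := #|[set y in A | (pIo y < pIo x)%N]|.

Lemma rl_Psi x : x \in A -> rl (Psi A) (pIo x) = rankA x.
Proof.
move=> xA; rewrite /rl /rankA.
have -> : [set u in Psi A | (u < pIo x)%N] = pIo @: [set y in A | (pIo y < pIo x)%N].
  apply/setP => u; rewrite inE; apply/andP/imsetP.
    move=> [/setUP [] /imsetP [y yA ->] lt].
      by exists y; rewrite // inE yA lt.
    by have := PA_IJ hA xA yA; mlia.
  move=> [y]; rewrite inE => /andP [yA lt] ->; split => //.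
  by apply/setUP; left; apply/imsetP; exists y.
rewrite card_in_imset // => y z; rewrite !inE => /andP [yA _] /andP [zA _].
exact: (PA_injI hA yA zA).
Qed.

Lemma rg_Psi x : x \in A -> rg (Psi A) (pJo x) = rankA x.
Proof.
move=> xA; rewrite /rg /rankA.
have -> : [set u in Psi A | (pJo x < u)%N] = pJo @: [set y in A | (pIo y < pIo x)%N].
  apply/setP => u; rewrite inE; apply/andP/imsetP.
    move=> [/setUP [] /imsetP [y yA ->] lt].
      by have := PA_IJ hA yA xA; mlia.
    exists y => //; rewrite inE yA /=.
    case: (ltngtP (pIo y) (pIo x)) => // h.
      by have := PA_nest hA xA yA h; mlia.
    by move: lt; rewrite (PA_injI hA yA xA (val_inj h)) ltnn.
  move=> [y]; rewrite inE => /andP [yA lt] ->; split.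
    by apply/setUP; right; apply/imsetP; exists y.
  exact: (PA_nest hA yA xA lt).
rewrite card_in_imset // => y z; rewrite !inE => /andP [yA _] /andP [zA _].
exact: (PA_injJ hA yA zA).
Qed.

Lemma pI_Psi x : x \in A -> pIo x \in Psi A.
Proof. by move=> xA; apply/setUP; left; apply/imsetP; exists x. Qed.
Lemma pJ_Psi x : x \in A -> pJo x \in Psi A.
Proof. by move=> xA; apply/setUP; right; apply/imsetP; exists x. Qed.

Lemma PA_Psi x : (x \in A) =
  [&& plusb x, pIo x \in Psi A, pJo x \in Psi A & rl (Psi A) (pIo x) == rg (Psi A) (pJo x)].
Proof.
apply/idP/idP.
  move=> xA; by rewrite (PA_plus hA xA) pI_Psi // pJ_Psi // rl_Psi // rg_Psi // eqxx.
move=> /and4P [px hi hj /eqP e].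
move: (hi) => /setUP [] /imsetP [y yA ey].
  have ej : pJo x = pJo y.
    apply: (rg_inj hj (pJ_Psi yA)); by rewrite -e ey rl_Psi // rg_Psi.
  by rewrite (plus_inj px (PA_plus hA yA) ey ej).
have := pIJ x; have := pIJ y; rewrite ey => h1 h2.
case: (ltngtP (pJo y) (pJo x)) => h.
- have := rg_strict hj h; rewrite -e ey (rg_Psi yA) -(rl_Psi yA).
  by have := rl_mono (Psi A) h1; mlia.
- mlia.
- have ej : pJo x = pJo y by apply/val_inj.
  have eIJ : pIo y = pJo y.
    apply: (rl_inj (pI_Psi yA) (pJ_Psi yA)).
    by rewrite rl_Psi // -ey e ej rg_Psi.
  have ei : pIo x = pIo y by rewrite ey eIJ.
  by rewrite (plus_inj px (PA_plus hA yA) ei ej).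
Qed.

Lemma card_Psi : exists2 d, (d <= 1)%N && (d <= #|A|)%N & #|Psi A| + d = #|A| + #|A|.
Proof.
exists #|[set pIo x | x in A] :&: [set pJo x | x in A]|; last first.
  rewrite cardsUI !card_in_imset //; [exact: (PA_injJ hA) | exact: (PA_injI hA)].
apply/andP; split; last first.
  rewrite -(card_in_imset (f := pIo) (D := A)); last exact: (PA_injI hA).
  by apply: subset_leq_card; apply: subsetIl.
apply/card_le1_eqP => u v /setIP [/imsetP [x xA ->] /imsetP [y yA e1]]
   /setIP [/imsetP [x' xA' ->] /imsetP [y' yA' e2]].
have exy := PA_IJeq hA xA yA e1; rewrite -exy in e1.
have exy' := PA_IJeq hA xA' yA' e2; rewrite -exy' in e2.
have f1 : (pIo x : nat) = pJo x by rewrite e1.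
have f2 : (pIo x' : nat) = pJo x' by rewrite e2.
case: (ltngtP (pIo x) (pIo x')) => h.
- have := PA_nest hA xA xA' h; mlia.
- have := PA_nest hA xA' xA h; mlia.
- exact: val_inj.
Qed.

Lemma max_Psi : (ord_max \in Psi A) = hasA A.
Proof.
apply/idP/exists_inP.
  have key : forall x, x \in A -> pJo x = ord_max -> isA x.
    move=> x xA e; apply/negPn/negP => /nonA_val [_]; rewrite e /=; mlia.
  move=> /setUP [] /imsetP [x xA e]; exists x => //; apply: key => //;
    apply/eq_max_of; have := pIJ x; rewrite -?e /=; mlia.
move=> [x xA ix]; have [_ e] := alpha_val (PA_plus hA xA) ix.
by rewrite -e pJ_Psi.
Qed.

End PsiFacts.

Lemma Psi_inj (A B : {set posroot n}) : PA A -> PA B -> Psi A = Psi B -> A = B.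
Proof. by move=> hA hB e; apply/setP => x; rewrite (PA_Psi hA) (PA_Psi hB) e. Qed.

Lemma Psi_surj (U : {set 'I_n}) : exists2 A, PA A & Psi A = U.
Proof.
pose A := [set x | [&& plusb x, pIo x \in U, pJo x \in U & rl U (pIo x) == rg U (pJo x)]].
have hA : PA A.
  apply: PA_intro.
  - by move=> x; rewrite inE => /and4P [].
  - move=> x y; rewrite !inE => /and4P [_ xi xj /eqP ex] /and4P [_ yi yj /eqP ey] h.
    have := rl_strict xi h; rewrite ex ey => h2.
    rewrite ltnNge; apply/negP => /(rg_mono U); mlia.
  - move=> x y; rewrite !inE => /and4P [px xi xj /eqP ex] /and4P [py yi yj /eqP ey] e.
    apply: plus_inj => //; apply: (rg_inj xj yj); by rewrite -ex -ey e.
exists A => //; apply/setP => u; apply/idP/idP.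
  by move=> /setUP [] /imsetP [x]; rewrite inE => /and4P [_ ? ? _] ->.
move=> uU.
pose r := fun w : 'I_n => rl U w.
have rlt : {in U, forall w, r w < #|U|}.
  by move=> w wU; rewrite /r -(rl_rg wU); mlia.
have rinj : {in U &, injective r}.
  move=> a b aU bU /(rl_inj aU bU) ->; done.
have hu := rl_rg uU.
have hk : (#|U| - 1 - rl U u < #|U|)%N by mlia.
have [v vU ev] := rank_surj rinj rlt hk.
rewrite /r in ev.
have hv := rl_rg vU.
case: (leqP u v) => h.
  have [p1 p2 p3] := mkP_props h.
  have xA : mkP u v \in A by rewrite inE p1 p2 p3 uU vU /=; apply/eqP; mlia.
  by rewrite -p1 pI_Psi.
have [p1 p2 p3] := mkP_props (ltnW h).
have xA : mkP v u \in A by rewrite inE p1 p2 p3 uU vU /=; apply/eqP; mlia.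
by rewrite -p2 pJ_Psi.
Qed.

Lemma cnt_out k : #|[set U : {set 'I_n} | (U \subset [set~ ord_max]) && (#|U| == k)]| = 'C(N, k).
Proof. by rewrite cards_draws cardsC1 card_ord. Qed.

Lemma cnt_in k : #|[set U : {set 'I_n} | (ord_max \in U) && (#|U| == k.+1)]| = 'C(N, k).
Proof.
have := cardsID [set U : {set 'I_n} | ord_max \in U] [set U : {set 'I_n} | #|U| == k.+1].
rewrite card_draws card_ord binS -(cnt_out k.+1).
have -> : [set U : {set 'I_n} | #|U| == k.+1] :&: [set U : {set 'I_n} | ord_max \in U] =
   [set U : {set 'I_n} | (ord_max \in U) && (#|U| == k.+1)].
  by apply/setP => U; rewrite !inE andbC.
have -> : [set U : {set 'I_n} | #|U| == k.+1] :\: [set U : {set 'I_n} | ord_max \in U] =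
   [set U : {set 'I_n} | (U \subset [set~ ord_max]) && (#|U| == k.+1)].
  apply/setP => U; rewrite !inE; congr (_ && _).
  apply/idP/subsetP => [h u uU | h].
    rewrite !inE; apply/eqP => e; rewrite e in uU; by rewrite uU in h.
  by apply/negP => /h; rewrite !inE eqxx.
by rewrite addnC => /addnI.
Qed.

Lemma sizes_ok (A : {set posroot n}) (U : {set 'I_n}) s : (1 <= s)%N -> PA A -> Psi A = U ->
  ((#|U| == 2 * s) || (#|U| == 2 * s - 1)) = (#|A| == s).
Proof.
move=> s1 hA <-; have [d /andP [d1 d2] e] := card_Psi hA.
apply/idP/idP.
  case/orP => /eqP h; apply/eqP; mlia.
move/eqP => cA; move: d1; rewrite leq_eqVlt ltnS leqn0 => /orP [] /eqP hd.
  by apply/orP; right; apply/eqP; mlia.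
by apply/orP; left; apply/eqP; mlia.
Qed.

Lemma card_A1 s : (1 <= s)%N -> #|A1set n s| = 'C(N, 2 * s) + 'C(N, 2 * s - 1).
Proof.
move=> s1; rewrite A1E -(card_in_imset (f := Psi)); last first.
  move=> A B; rewrite !inE => /andP [/andP [hA _] _] /andP [/andP [hB _] _]; exact: Psi_inj.
rewrite -!cnt_out -card_or; last by move=> U; apply/negP => /andP [/eqP -> /eqP]; mlia.
apply: eq_card => U; rewrite [RHS]inE; apply/imsetP/idP.
  move=> [A]; rewrite inE => /andP [/andP [hA cA] nA] eU; rewrite (sizes_ok s1 hA (esym eU)) cA andbT.
  apply/subsetP => u uP; rewrite in_setC1; apply/eqP => e; move: uP; rewrite eU e (max_Psi hA) => h; by rewrite h in nA.
move=> /andP [sU cU]; have [A hA eA] := Psi_surj U; exists A => //.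
rewrite inE hA -(sizes_ok s1 hA eA) cU /= -(max_Psi hA) eA.
by apply/negP => /(subsetP sU); rewrite !inE eqxx.
Qed.

Lemma card_A2 s : (1 <= s)%N -> #|A2set n s| = 'C(N, 2 * s - 1) + 'C(N, 2 * s - 2).
Proof.
move=> s1; rewrite A2E // -(card_in_imset (f := Psi)); last first.
  move=> A B; rewrite !inE => /andP [/andP [hA _] _] /andP [/andP [hB _] _]; exact: Psi_inj.
have e1 : (2 * s = (2 * s - 1).+1)%N by mlia.
have e2 : (2 * s - 1 = (2 * s - 2).+1)%N by mlia.
rewrite -(cnt_in (2 * s - 1)) -(cnt_in (2 * s - 2)) -e1 -e2.
rewrite -card_or; last by move=> U; apply/negP => /andP [/eqP -> /eqP]; mlia.
apply: eq_card => U; rewrite [RHS]inE; apply/imsetP/idP.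
  move=> [A]; rewrite inE => /andP [/andP [hA cA] hsA] eU.
  by rewrite (sizes_ok s1 hA (esym eU)) cA andbT eU (max_Psi hA).
move=> /andP [mU cU]; have [A hA eA] := Psi_surj U; exists A => //.
by rewrite inE hA -(sizes_ok s1 hA eA) cU /= -(max_Psi hA) eA.
Qed.

Lemma card_PA_lt M : \sum_(s < M) #|Aset n s| = #|[set A : {set posroot n} | PA A && (#|A| < M)%N]|.
Proof.
elim: M => [|M IH].
  rewrite big_ord0; apply/esym/eqP; rewrite cards_eq0; apply/eqP/setP => A; by rewrite !inE ltn0 andbF.
rewrite big_ord_recr /= IH AsetE.
have -> : [set A : {set posroot n} | PA A && (#|A| < M.+1)%N] =
   [set A | PA A && ((#|A| < M)%N || (#|A| == M))].
  by apply/setP => A; rewrite !inE ltnS leq_eqVlt orbC.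
by rewrite card_or // => A; apply/negP => /andP [h /eqP e]; move: h; rewrite e ltnn.
Qed.

Lemma card_all : \sum_(s < #|{: posroot n}|.+1) #|Aset n s| = 2 ^ n.
Proof.
rewrite card_PA_lt.
have -> : [set A : {set posroot n} | PA A && (#|A| < #|{: posroot n}|.+1)%N] = [set A | PA A].
  by apply/setP => A; rewrite !inE ltnS max_card andbT.
rewrite -(card_in_imset (f := Psi)); last by move=> A B; rewrite !inE; exact: Psi_inj.
have -> : Psi @: [set A | PA A] = [set: {set 'I_n}].
  apply/setP => U; rewrite inE; apply/imsetP; have [A hA eA] := Psi_surj U.
  by exists A; rewrite ?inE.
have -> : [set: {set 'I_n}] = powerset [set: 'I_n].
  by apply/setP => U; rewrite inE powersetE subsetT.
by rewrite card_powerset cardsT card_ord.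
Qed.

End Main.

Theorem mainTheorem10 (n : nat) (hn : (0 < n)%N) :
  (forall s : nat, (1 <= s)%N ->
     [/\ Aset n s = A1set n s :|: A2set n s,
         [disjoint A1set n s & A2set n s],
         #|A1set n s| = ('C(n - 1, 2 * s) + 'C(n - 1, 2 * s - 1))%N &
         #|A2set n s| = ('C(n - 1, 2 * s - 1) + 'C(n - 1, 2 * s - 2))%N])
  /\ (\sum_(s < #|{: posroot n}|.+1) #|Aset n s|)%N = (2 ^ n)%N.
Proof.
case: n hn => [//|N] _; split; last exact: card_all.
move=> s s1; rewrite subn1 /=; split.
- rewrite AsetE A1E A2E //; apply/setP => A; rewrite !inE.
  by case: (PA A && (#|A| == s)); case: (hasA A).
- rewrite -setI_eq0 A1E A2E //; apply/eqP/setP => A; rewrite !inE.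
  by case: (hasA A); rewrite ?andbF.
- exact: card_A1.
- exact: card_A2.
Qed.
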